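(* Let $\sigma$ be a permutation of $[n]$. Then every interval of integers of length $\sqrt{32\,n\,D(\sigma)}$ contained in $[n]$ contains an element of $A_\sigma$.
   Context: $[n]=\{1,\dots,n\}$, identified with $\mathbb{Z}_n$. For $k\in[n]$, $B_\sigma(k)=|\{1\le q\le k:\sigma(q)\le\sigma(k)\}|$ and $A_\sigma=\{B_\sigma(k):k\in[n]\}$. An interval of $\mathbb{Z}_n$ is any subset that is the image of an interval of consecutive integers under the projection $\mathbb{Z}\to\mathbb{Z}_n$ (wrap-around allowed). For $S,T\subseteq\mathbb{Z}_n$, $D_T(S)=\bigl|\,|S\cap T|-|S||T|/n\,\bigr|$, and $D(\sigma)=\max_{I,J}D_J(\sigma(I))$ over all intervals $I,J$ of $\mathbb{Z}_n$. *)

(* Defs.v *)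
From HB Require Import structures.
From mathcomp Require Import all_boot all_order all_algebra.
From mathcomp Require Import fingroup perm.
From mathcomp Require Import boolp reals.
Set Implicit Arguments. Unset Strict Implicit. Unset Printing Implicit Defensive.
Import Order.TTheory GRing.Theory Num.Theory.
Local Open Scope ring_scope.

(* Convention: [n] = {1,...,n} is represented by 'I_n = {0,...,n-1} via i |-> i+1;
   a permutation sigma of [n] is an element of 'S_n.  Z_n is identified with 'I_n
   (the residue of the integer j is j mod n). *)

Definition Bsig (n : nat) (s : 'S_n) (k : 'I_n) : nat :=
  #|[set q : 'I_n | (q <= k)%N && (s q <= s k)%N]|.

Definition Asig (n : nat) (s : 'S_n) : pred nat :=
  fun b => [exists k : 'I_n, Bsig s k == b].

(* Since a is only relevant
   modulo n, it suffices to take a a natural number. *)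
Definition is_interval (n : nat) (S : {set 'I_n}) : Prop :=
  exists a m : nat, S = [set i : 'I_n | [exists t : 'I_m, (val i == (a + t) %% n)%N]].

Definition discr (R : realType) (n : nat) (T S : {set 'I_n}) : R :=
  `| (#|S :&: T|%:R - #|S|%:R * #|T|%:R / n%:R) |.

(* D(sigma) = max over intervals I, J of Z_n of D_J(sigma(I)) (all values are >= 0,
   and the max ranges over a finite nonempty family, so the 0 seed is harmless). *)
Definition Dsig (R : realType) (n : nat) (s : 'S_n) : R :=
  \big[Num.max/0]_(p : {set 'I_n} * {set 'I_n} |
                    `[< is_interval p.1 /\ is_interval p.2 >])
     discr R p.2 (s @: p.1).

(* Main.v *)
Require Import Defs.
From HB Require Import structures.
From mathcomp Require Import all_boot all_order all_algebra.
From mathcomp Require Import fingroup perm.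
From mathcomp Require Import boolp reals.
From mathcomp Require Import zify ring lra.
Import Order.TTheory GRing.Theory Num.Theory.
Local Open Scope ring_scope.

Definition itv n lo hi : {set 'I_n} := [set i : 'I_n | (lo <= i < hi)%N].

Lemma itv_interval n lo hi : (hi <= n)%N -> is_interval (itv n lo hi).
Proof.
move=> hn; exists lo, (hi - lo)%N; apply/setP => i; rewrite !inE.
apply/andP/existsP.
- case=> h1 h2.
  have ht : (i - lo < hi - lo)%N by lia.
  exists (Ordinal ht) => /=; rewrite subnKC // modn_small //.
- case=> t /eqP hi'.
  have : (lo + t < n)%N by have := ltn_ord t; lia.
  move=> /modn_small hm.
  have hv : nat_of_ord i = (lo + t)%N by rewrite -hm -hi'.
  have := ltn_ord t; lia.
Qed.

Lemma count_itv lo hi k : count (fun i => (lo <= i < hi)%N) (iota 0 k) = (minn hi k - minn lo k)%N.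
Proof.
elim: k => [|k IH]; first by rewrite /= !minn0.
rewrite -[k.+1]addn1 iotaD count_cat IH /= add0n. case: (lo <= k < hi)%N /andP => /=; lia.
Qed.

Lemma card_itv n lo hi : (hi <= n)%N -> #|itv n lo hi| = (hi - lo)%N.
Proof.
move=> hn.
rewrite cardE /enum_mem -enumT /= size_filter.
have -> : count (mem (itv n lo hi)) (enum 'I_n) =
          count (fun i => (lo <= i < hi)%N) (map val (enum 'I_n)).
  by rewrite count_map; apply: eq_count => i; rewrite /= inE.
rewrite val_enum_ord count_itv; lia.
Qed.

Lemma le_bigmax_gen (R : realType) (T : eqType) (r : seq T) (P : pred T) (F : T -> R) x :
  x \in r -> P x -> F x <= \big[Num.max/0]_(i <- r | P i) F i.
Proof.
elim: r => // y r IH; rewrite inE big_cons => /orP [/eqP ->|xr] Px.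
  by rewrite Px le_max lexx.
case: (P y); rewrite ?le_max IH ?orbT //.
Qed.

Lemma le_Dsig (R : realType) n (s : 'S_n) I J :
  is_interval I -> is_interval J -> discr R J (s @: I) <= Dsig R s.
Proof.
move=> hI hJ; rewrite /Dsig.
apply: (@le_bigmax_gen R _ _ _ (fun p : {set 'I_n} * {set 'I_n} => discr R p.2 (s @: p.1)) (I, J)).
  exact: mem_index_enum.
by apply: asboolT.
Qed.

Lemma discr_itv (R : realType) n (s : 'S_n) lo hi lo' hi' :
  (hi <= n)%N -> (hi' <= n)%N ->
  `| #|s @: itv n lo hi :&: itv n lo' hi'|%:R - (hi - lo)%:R * (hi' - lo')%:R / n%:R | <= Dsig R s.
Proof.
move=> h1 h2.
have := @le_Dsig R n s _ _ (@itv_interval n lo hi h1) (@itv_interval n lo' hi' h2).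
by rewrite /discr card_imset ?card_itv //; exact: perm_inj.
Qed.

Lemma Bsig_card n (s : 'S_n) (k : 'I_n) :
  #|s @: itv n 0 k.+1 :&: itv n 0 (s k).+1| = Bsig s k.
Proof.
rewrite /Bsig -[RHS](card_imset _ (@perm_inj _ s)); apply: eq_card => y.
rewrite -(permKV s y) inE !mem_imset; try exact: perm_inj.
by rewrite !inE.
Qed.

Lemma Bsig_bounds n (s : 'S_n) (k : 'I_n) : (0 < Bsig s k <= k.+1)%N.
Proof.
rewrite /Bsig; apply/andP; split.
  by apply/card_gt0P; exists k; rewrite !inE !leqnn.
rewrite -[k.+1]subn0 -(@card_itv n 0 k.+1) ?ltn_ord //; apply: subset_leq_card.
by apply/subsetP => q; rewrite !inE => /andP[].
Qed.

Lemma discr_mul (R : realType) n (c x y : nat) (D : R) : (0 < n)%N ->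
  `|c%:R - x%:R * y%:R / n%:R| <= D ->
  (n * c)%:R <= (x * y)%:R + n%:R * D /\ (x * y)%:R <= (n * c)%:R + n%:R * D.
Proof.
move=> n0; rewrite ler_norml => /andP[h1 h2].
have n0R : (0 : R) < n%:R by rewrite ltr0n.
have e : n%:R * (c%:R - x%:R * y%:R / n%:R) = (n * c)%:R - (x * y)%:R :> R.
  rewrite !natrM; field; by rewrite gt_eqF.
have h2' := ler_wpM2l (ltW n0R) h2.
have h1' := ler_wpM2l (ltW n0R) h1.
rewrite e in h2' h1'.
split; lra.
Qed.



Lemma t1 n a d h X Y : (1 <= a)%N -> (1 <= d)%N -> (1 <= h)%N -> (a + d + h - 1 <= X)%N -> (X <= n)%N -> (n - h <= Y.-1)%N -> (0 < Y)%N -> (h <= n)%N ->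
  (n * a + n * d <= X * Y)%N.
Proof.
move=> a1 d1 h1 hx hxn hy y0 hn.
have e1 : (X * (n - h + 1) <= X * Y)%N by apply: leq_mul => //; lia.
have [p ep] : exists p, X = (h + p)%N by exists (X - h)%N; lia.
have [r er] : exists r, n = (X + r)%N by exists (n - X)%N; lia.
have e2 : (n * (a + d) <= n * (p + 1))%N by apply: leq_mul => //; lia.
have e3 : (n * (p + 1) <= X * (n - h + 1))%N.
  have -> : (n - h + 1 = p + r + 1)%N by lia.
  rewrite er ep. nia.
lia.
Qed.

Lemma t2 n a m d X Y : (X <= a + m - 1 - d)%N -> (Y <= n)%N -> (d <= a + m - 1)%N ->
  (X * Y + n * d <= n * (a + m - 1))%N.
Proof.
move=> hx hy hd.
have e1 : (X * Y <= (a + m - 1 - d) * n)%N by apply: leq_mul.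
have e2 : ((a + m - 1 - d) * n + n * d = n * (a + m - 1))%N.
  by rewrite mulnC -mulnDr subnK.
lia.
Qed.
Lemma t3 m w h : (16 <= m)%N -> (7 * m <= 16 * w + 16)%N -> (m <= 2 * h + 1)%N ->
  (m * m < 32 * (w * h))%N.
Proof.
move=> m16 hw hh.
have e : ((7 * m - 16) * (m - 1) <= (16 * w) * (2 * h))%N by apply: leq_mul; lia.
have e2 : (m * m < (7 * m - 16) * (m - 1))%N.
  have [k ->] : exists k, m = (16 + k)%N by exists (m - 16)%N; lia.
  nia.
have -> : (32 * (w * h) = (16 * w) * (2 * h))%N by rewrite mulnACA; lia.
lia.
Qed.
Lemma t4 m n : (16 * n <= m * m)%N -> (m <= n)%N -> (0 < n)%N -> (16 <= m)%N.
Proof.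
move=> h1 h2 h3.
have : (m * m <= m * n)%N by apply: leq_mul.
nia.
Qed.
Lemma t5 m n d : (m <= n)%N -> (m < 32 * d)%N -> (m * m <= 32 * (n * d))%N.
Proof.
move=> h1 h2.
have : (m * m <= n * (32 * d))%N by apply: leq_mul => //; lia.
have -> : (32 * (n * d) = n * (32 * d))%N by rewrite mulnCA.
done.
Qed.

Theorem mainTheorem17 (R : realType) (n : nat) (s : 'S_n) (a m : nat) :
  (1 <= a)%N -> (0 < m)%N -> (a + m - 1 <= n)%N ->
  Num.sqrt (32 * n%:R * Dsig R s) <= (m%:R : R) ->
  exists b : nat, [/\ (a <= b)%N, (b < a + m)%N & Asig s b].
Proof.
move=> a1 m0 amn hsq.
have n0 : (0 < n)%N by lia.
case: (ltnP 1 n) => [n2|n1].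
2:{ exists 1%N; split; try lia.
    apply/existsP; exists (Ordinal n0).
    have := @Bsig_bounds n s (Ordinal n0); rewrite /= => hb; apply/eqP; lia. }
set D := Dsig R s.
pose i0 := Ordinal n0.
have n0R : (0 : R) < n%:R by rewrite ltr0n.
have hD1 : 1 - 1 / n%:R <= D.
  have := @discr_itv R n s 0 1 (s i0) (s i0).+1 n0 (ltn_ord (s i0)).
  have -> : #|s @: itv n 0 1 :&: itv n (s i0) (s i0).+1| = 1%N.
    apply/eqP; rewrite eqn_leq; apply/andP; split.
      rewrite -[X in (_ <= X)%N](subSnn (s i0)) -(@card_itv n (s i0) (s i0).+1) ?ltn_ord //.
      by apply: subset_leq_card; exact: subsetIr.
    apply/card_gt0P; exists (s i0); rewrite inE mem_imset; last exact: perm_inj.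
    by rewrite !inE /= leqnn ltnSn.
  rewrite subn0 subSnn => h; rewrite !mul1r ler_norml in h; case/andP: h => h1 h2; rewrite /D; lra.
have hnD : n%:R - 1 <= n%:R * D.
  have := ler_wpM2l (ltW n0R) hD1.
  have -> : n%:R * (1 - 1 / n%:R) = n%:R - 1 :> R by field; rewrite gt_eqF.
  by [].
have hn2 : (2 : R) <= n%:R by rewrite (ler_nat R 2 n).
have hpos : 0 <= 32 * n%:R * D by rewrite -mulrA; lra.
have hsq2 : 32 * (n%:R * D) <= m%:R * m%:R.
  rewrite mulrA -(sqr_sqrtr hpos) expr2.
  by apply: ler_pM; rewrite ?sqrtr_ge0.
have hmn : (m <= n)%N by lia.
have h16 : (16 * n <= m * m)%N.
  rewrite -(ler_nat R) !natrM; lra.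
have m16 : (16 <= m)%N by exact: (@t4 m n h16 hmn n0).
pose d := (m %/ 32).+1.
pose h := (m %/ 2)%N.
pose lo := (a + d + h - 2)%N.
pose hi := (a + m - 1 - d)%N.
have hd1 : (m < 32 * d)%N by rewrite /d; lia.
have hd2 : (32 * d <= m + 32)%N by rewrite /d; lia.
have hh1 : (2 * h <= m)%N by rewrite /h; lia.
have hh2 : (m <= 2 * h + 1)%N by rewrite /h; lia.
have hw : (16 * (hi - lo) + 16 >= 7 * m)%N by rewrite /hi /lo; lia.
have hw2 : (hi - lo = m + 1 - 2 * d - h)%N by rewrite /hi /lo; lia.
have key : (m * m < 32 * ((hi - lo) * h))%N by apply: t3.
have hDd : n%:R * D <= (n * d)%:R.
  have : (m * m <= 32 * (n * d))%N by apply: t5.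
  rewrite -(ler_nat R) !natrM => hh; lra.
have hhi : (hi <= n)%N by rewrite /hi; lia.
have : s @: itv n lo hi :&: itv n (n - h) n != set0.
  apply/negP => /eqP E.
  have := @discr_itv R n s lo hi (n - h) n hhi (leqnn n).
  rewrite E cards0 -/D => hh.
  have [_ u] := @discr_mul R n _ _ _ _ n0 hh.
  move: u; rewrite muln0 => u.
  have : (32 * ((hi - lo) * (n - (n - h))))%:R <= (m * m)%:R :> R.
    rewrite (natrM R 32) (natrM R m m); lra.
  have hhn : (h <= n)%N.
    apply: leq_trans hmn; apply: leq_trans hh1.
    by rewrite mul2n -addnn leq_addl.
  by rewrite ler_nat subKn // leqNgt key.
case/set0Pn => y; rewrite inE => /andP[/imsetP[x xI ->] yJ].
move: xI yJ; rewrite !inE => /andP[xlo xhi] /andP[sxl _].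
have := @discr_itv R n s 0 x.+1 0 (s x).+1 (ltn_ord x) (ltn_ord (s x)).
rewrite Bsig_card !subn0 -/D => hB.
have [u1 u2] := @discr_mul R n _ _ _ _ n0 hB.
have hhn : (h <= n)%N.
  apply: leq_trans hmn; apply: leq_trans hh1.
  by rewrite mul2n -addnn leq_addl.
have h1 : (1 <= h)%N by rewrite /h; clear - m16; lia.
have l1 : (n * a + n * d <= x.+1 * (s x).+1)%N.
  have hx : (x.+1 <= n)%N by apply: ltn_ord.
  have hx2 : (a + d + h - 1 <= x.+1)%N by move: xlo; rewrite /lo; clear; lia.
  by apply: (@t1 n a d h) => //; rewrite /d.
have l2 : (x.+1 * (s x).+1 + n * d <= n * (a + m - 1))%N.
  have hsx : ((s x).+1 <= n)%N by apply: ltn_ord.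
  have hx2 : (x.+1 <= a + m - 1 - d)%N by move: xhi; rewrite /hi; clear; lia.
  apply: t2 => //; move: hd2 m16; clear - a1; lia.
exists (Bsig s x); split.
- rewrite -(leq_pmul2l n0) -(ler_nat R).
  move: l1; rewrite -(ler_nat R) natrD => l1. lra.
- have : (n * Bsig s x <= n * (a + m - 1))%N.
    rewrite -(ler_nat R). move: l2; rewrite -(ler_nat R) natrD => l2. lra.
  rewrite leq_pmul2l //; lia.
- by apply/existsP; exists x.
Qed.
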